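(* For any $\theta=(B,\Omega)$ and $\psi_i=(m_i,s_i)$, $\big[\nabla_{\mathrm{vec}(B)\psi_i}J_i(\nabla_{\psi_i\psi_i}J_i)^{-1}\nabla_{\psi_i\mathrm{vec}(B)}J_i\big](\theta,\psi_i)=-(D_{\tilde a_i}^{1/2}E_iD_{\tilde a_i}^{1/2})\otimes x_ix_i^\top$, where $E_i=G_i+(I_p-G_i)C_i(I_p-G_i)$, $G_i=D_{s_i}\Lambda_iD_{s_i}$, $\Lambda_i=\big(I_p+D_{s_i}^2(D_{\tilde a_i}+D_{\tilde a_i}D_{s_i}^2+\Omega_D)\big)^{-1}D_{\tilde a_i}D_{s_i}^2$ and $C_i=\big(I_p+D_{\tilde a_i}^{-1/2}\Omega D_{\tilde a_i}^{-1/2}-D_{s_i}\Lambda_iD_{s_i}\big)^{-1}$.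
   Context: PLN model, observation $i$ with counts $Y_i\in\mathbb N^p$, covariate $x_i\in\mathbb R^m$, offset $o_i\in\mathbb R^p$; $B\in\mathcal M_{m,p}(\mathbb R)$ (columns $B_j$), $\Omega$ symmetric positive definite. Variational parameter $\psi_i=(m_i,s_i)\in\mathbb R^p\times(0,\infty)^p$. Single-observation ELBO: $J_i(\theta,\psi_i)=Y_i^\top(o_i+m_i+B^\top x_i)-\tilde a_i^\top1_p-\sum_j\log(Y_{ij}!)+\frac12\log|\Omega|-\frac12m_i^\top\Omega m_i-\frac12\mathrm{diag}(\Omega)^\top s_i^2+\sum_j\log s_{ij}+\frac p2$, $\tilde a_{ij}=\exp(o_{ij}+x_i^\top B_j+m_{ij}+s_{ij}^2/2)$. $\mathrm{vec}(B)$ stacks the columns of $B$. Notation: $D_v=\mathrm{Diag}(v)$, $\Omega_D=I_p\odot\Omega$, $\otimes$ Kronecker product. *)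

(* Defs.v *)
From HB Require Import structures.
From mathcomp Require Import all_boot all_order all_algebra.
From mathcomp Require Import all_classical all_reals all_analysis.
From mathcomp.real_closed Require Import mxtens.

Set Implicit Arguments.
Unset Strict Implicit.
Unset Printing Implicit Defensive.

Import Order.TTheory GRing.Theory Num.Theory.
Import numFieldNormedType.Exports.
Local Open Scope ring_scope.

Section PLN.
Variables (R : realType) (p m : nat).

(* \tilde a_{ij} = exp(o_ij + x_i^T B_j + m_ij + s_ij^2/2);
   x : 'rV_m (row vector x_i^T), o, mu, s : 'rV_p, B : 'M_(m,p). *)
Definition atil (x : 'rV[R]_m) (o : 'rV[R]_p) (B : 'M[R]_(m, p))
  (mu s : 'rV[R]_p) : 'rV[R]_p :=
  \row_j expR (o 0 j + (x *m B) 0 j + mu 0 j + s 0 j ^+ 2 / 2).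

Definition ELBO (Y : 'I_p -> nat) (x : 'rV[R]_m) (o : 'rV[R]_p)
  (B : 'M[R]_(m, p)) (Om : 'M[R]_p) (mu s : 'rV[R]_p) : R :=
  \sum_j (Y j)%:R * (o 0 j + mu 0 j + (x *m B) 0 j)
  - \sum_j atil x o B mu s 0 j
  - \sum_j ln ((Y j)`!)%:R
  + 2^-1 * ln (\det Om)
  - 2^-1 * (mu *m Om *m mu^T) 0 0
  - 2^-1 * \sum_j Om j j * s 0 j ^+ 2
  + \sum_j ln (s 0 j)
  + p%:R / 2.

Definition ELBOpsi Y x o Om (B : 'M[R]_(m, p)) (psi : 'rV[R]_(p + p)) : R :=
  ELBO Y x o B Om (lsubmx psi) (rsubmx psi).

Definition epsi (a : 'I_(p + p)) : 'rV[R]_(p + p) := delta_mx 0 a.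

(* direction in B-space corresponding to coordinate a of vec(B)
   (vec stacks the columns B_j; coordinate (j,k) <-> B k j, index j*m+k,
   the same index convention as the Kronecker product tensmx) *)
Definition eB (a : 'I_(p * m)) : 'M[R]_(m, p) :=
  delta_mx (mxtens_unindex a).2 (mxtens_unindex a).1.

Definition Hpsipsi Y x o Om B psi : 'M[R]_(p + p) :=
  \matrix_(a, b) 'D_(epsi a) (fun q => 'D_(epsi b) (ELBOpsi Y x o Om B) q) psi.

Definition HBpsi Y x o Om B psi : 'M[R]_(p * m, p + p) :=
  \matrix_(a, b)
    'D_(eB a) (fun B' => 'D_(epsi b) (ELBOpsi Y x o Om B') psi) B.

Definition HpsiB Y x o Om B psi : 'M[R]_(p + p, p * m) :=
  \matrix_(b, a)
    'D_(epsi b) (fun q => 'D_(eB a) (fun B' => ELBOpsi Y x o Om B' q) B) psi.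

Definition Dg (v : 'rV[R]_p) : 'M[R]_p := diag_mx v.
Definition Dsqrt (v : 'rV[R]_p) : 'M[R]_p := diag_mx (map_mx Num.sqrt v).
Definition Dinvsqrt (v : 'rV[R]_p) : 'M[R]_p :=
  diag_mx (map_mx (fun t => (Num.sqrt t)^-1) v).
Definition OmD (Om : 'M[R]_p) : 'M[R]_p := diag_mx (\row_j Om j j).

Definition Lambda (a s : 'rV[R]_p) (Om : 'M[R]_p) : 'M[R]_p :=
  invmx (1%:M + (Dg s *m Dg s) *m (Dg a + Dg a *m (Dg s *m Dg s) + OmD Om))
  *m Dg a *m (Dg s *m Dg s).
Definition Gmx a s Om : 'M[R]_p := Dg s *m Lambda a s Om *m Dg s.
Definition Cmx a s Om : 'M[R]_p :=
  invmx (1%:M + Dinvsqrt a *m Om *m Dinvsqrt a - Dg s *m Lambda a s Om *m Dg s).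
Definition Emx a s Om : 'M[R]_p :=
  Gmx a s Om + (1%:M - Gmx a s Om) *m Cmx a s Om *m (1%:M - Gmx a s Om).

End PLN.

(* Main.v *)
Require Import Defs.
From HB Require Import structures.
From mathcomp Require Import all_boot all_order all_algebra.
From mathcomp Require Import all_classical all_reals all_analysis.
From mathcomp.real_closed Require Import mxtens.
From mathcomp Require Import ring lra.

Import Order.TTheory GRing.Theory Num.Theory.
Import numFieldNormedType.Exports.
Local Open Scope ring_scope.

Set Implicit Arguments. Unset Strict Implicit.
Section Calc.
Context {R : realType}.

Lemma derive_line (V W : normedModType R) (f : V -> W) x v :
  'D_v f x = 'D_1 (fun h : R => f (h *: v + x)) 0.
Proof.
rewrite /derive; set g1 := fun h => h^-1 *: _; set g2 := fun h => h^-1 *: _.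
suff -> : g1 = g2 by [].
by rewrite funeqE /g1 /g2 => h /=; rewrite addr0 scale0r add0r [_%:A]mulr1.
Qed.

Lemma is_derive_compR (V : normedModType R) (f : R -> R) (g : V -> R) x v a b :
  is_derive (g x) 1 f a -> is_derive x v g b ->
  is_derive x v (fun y => f (g y)) (a * b).
Proof.
move=> fa [gd gv].
have hg : is_derive (0:R) (1:R) (fun h : R => g (h *: v + x)) b.
  by split; [apply/(derivable1P g x v) | rewrite -derive_line].
have fa' : is_derive ((fun h : R => g (h *: v + x)) 0) (1:R) f a.
  by rewrite /= scale0r add0r.
have := is_derive1_comp fa' hg => -[d1 d2].
split; first by apply/(derivable1P (fun y => f (g y)) x v).
by rewrite derive_line.
Qed.

Lemma is_derive_coord {m n} (x v : 'M[R]_(m, n)) i j :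
  is_derive x v (fun N : 'M[R]_(m, n) => N i j) (v i j).
Proof.
have @f : {linear 'M[R]_(m, n) -> R}.
  by exists (fun N : 'M[R]_(_, _) => N i j); do 2![eexists]; do ?[constructor];
     rewrite ?mxE// => ? *; rewrite ?mxE//; move=> ?; rewrite !mxE.
rewrite (_ : (fun _ => _) = f) //.
have df : differentiable f x by exact/linear_differentiable/coord_continuous.
split; first exact: diff_derivable.
by rewrite deriveE // diff_lin //; exact: coord_continuous.
Qed.

End Calc.

Set Implicit Arguments. Unset Strict Implicit.
Section Calc.
Context {R : realType}.
Context {V : normedModType R}.
Implicit Types (f g : V -> R).

Lemma isdD f g x v df dg : is_derive x v f df -> is_derive x v g dg ->
  is_derive x v (fun y => f y + g y) (df + dg).
Proof. move=> h1 h2; exact: is_deriveD. Qed.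
Lemma isdB f g x v df dg : is_derive x v f df -> is_derive x v g dg ->
  is_derive x v (fun y => f y - g y) (df - dg).
Proof. move=> h1 h2; exact: is_deriveB. Qed.
Lemma isdN f x v df : is_derive x v f df ->
  is_derive x v (fun y => - f y) (- df).
Proof. move=> h1; exact: is_deriveN. Qed.
Lemma isdM f g x v df dg : is_derive x v f df -> is_derive x v g dg ->
  is_derive x v (fun y => f y * g y) (f x * dg + g x * df).
Proof. move=> h1 h2; exact: is_deriveM. Qed.
Lemma isdX f n x v df : is_derive x v f df ->
  is_derive x v (fun y => f y ^+ n) ((n%:R * f x ^+ n.-1) * df).
Proof.
move=> h1; have := is_deriveX n h1.
by rewrite (_ : f ^+ n = fun y => f y ^+ n) // funeqE => y; rewrite exprfctE.
Qed.
Lemma isdC (c : R) x v : is_derive x v (fun _ : V => c) 0.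
Proof. exact: is_derive_cst. Qed.
Lemma isdS n (h : 'I_n -> V -> R) x v (dh : 'I_n -> R) :
  (forall i, is_derive x v (h i) (dh i)) ->
  is_derive x v (fun y => \sum_(i < n) h i y) (\sum_(i < n) dh i).
Proof.
move=> H; have := is_derive_sum H.
by rewrite (_ : \sum_(i < n) h i = fun y => \sum_(i < n) h i y) // funeqE => y; rewrite fct_sumE.
Qed.
Lemma isdV f x v df : f x != 0 -> is_derive x v f df ->
  is_derive x v (fun y => (f y)^-1) (- (f x) ^- 2 * df).
Proof.
move=> fx [d1 d2]; split; first exact: derivableV.
by rewrite deriveV // d2.
Qed.
End Calc.

Section ELBOd.
Variables (R : realType) (p m : nat) (Y : 'I_p -> nat) (x : 'rV[R]_m) (o : 'rV[R]_p)
  (Om : 'M[R]_p).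

Lemma isd_lc (q v : 'rV[R]_(p + p)) j :
  is_derive q v (fun q : 'rV[R]_(p + p) => lsubmx q 0 j) (lsubmx v 0 j).
Proof.
rewrite mxE; have := is_derive_coord q v 0 (lshift p j).
by rewrite (_ : (fun N : 'rV_(p+p) => N 0 (lshift p j)) = (fun q => lsubmx q 0 j)) // funeqE => y; rewrite mxE.
Qed.
Lemma isd_rc (q v : 'rV[R]_(p + p)) j :
  is_derive q v (fun q : 'rV[R]_(p + p) => rsubmx q 0 j) (rsubmx v 0 j).
Proof.
rewrite mxE; have := is_derive_coord q v 0 (rshift p j).
by rewrite (_ : (fun N : 'rV_(p+p) => N 0 (rshift p j)) = (fun q => rsubmx q 0 j)) // funeqE => y; rewrite mxE.
Qed.
Lemma isd_xB (B U : 'M[R]_(m, p)) j :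
  is_derive B U (fun B : 'M[R]_(m, p) => (x *m B) 0 j) ((x *m U) 0 j).
Proof.
rewrite mxE (_ : (fun B : 'M[R]_(m, p) => (x *m B) 0 j) = (fun B => \sum_k x 0 k * B k j)); last first.
  by rewrite funeqE => y; rewrite mxE.
apply: isdS => k; apply: is_derive_eq; first  exact: (isdM (isdC (x 0 k) B U) (is_derive_coord B U k j)).
by rewrite mulr0 addr0.
Qed.
Lemma isd_quad (q v : 'rV[R]_(p + p)) :
  is_derive q v (fun q : 'rV[R]_(p + p) => (lsubmx q *m Om *m (lsubmx q)^T) 0 0)
    ((lsubmx v *m Om *m (lsubmx q)^T) 0 0 + (lsubmx q *m Om *m (lsubmx v)^T) 0 0).
Proof.
rewrite (_ : (fun q : 'rV[R]_(p + p) => _) = (fun q => \sum_k (\sum_i lsubmx q 0 i * Om i k) * lsubmx q 0 k)); last first.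
  by rewrite funeqE => y; rewrite !mxE; apply: eq_bigr => k _; rewrite !mxE; congr (_ * _); apply: eq_bigr => i _; rewrite mxE.
apply: is_derive_eq.
  apply: isdS => k; apply: isdM; last exact: isd_lc.
  apply: isdS => i; exact: (isdM (isd_lc _ _ _) (isdC _ _ _)).
rewrite !mxE -big_split /=; apply: eq_bigr => k _; rewrite !mxE.
rewrite addrC; congr (_ + _).
rewrite mulr_sumr mulr_suml; apply: eq_bigr => i _; rewrite !mxE mulr0 add0r; ring.
Qed.

Lemma isd_exp (V : normedModType R) (g : V -> R) y v b : is_derive y v g b ->
  is_derive y v (fun z => expR (g z)) (expR (g y) * b).
Proof. move=> h; exact: is_derive_compR. Qed.
Lemma isd_ln (V : normedModType R) (g : V -> R) y v b : 0 < g y -> is_derive y v g b ->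
  is_derive y v (fun z => ln (g z)) ((g y)^-1 * b).
Proof. move=> h1 h2; apply: is_derive_compR => //; exact: is_derive1_ln. Qed.


Lemma isd_lin1 (q w v : 'rV[R]_(p + p)) :
  is_derive q w (fun q : 'rV[R]_(p + p) => (lsubmx v *m Om *m (lsubmx q)^T) 0 0)
    ((lsubmx v *m Om *m (lsubmx w)^T) 0 0).
Proof.
rewrite (_ : (fun q : 'rV[R]_(p + p) => _) = (fun q => \sum_k (\sum_i lsubmx v 0 i * Om i k) * lsubmx q 0 k)); last first.
  by rewrite funeqE => y; rewrite !mxE; apply: eq_bigr => k _; rewrite !mxE.
apply: is_derive_eq.
  apply: isdS => k; exact: (isdM (isdC _ _ _) (isd_lc _ _ _)).
rewrite !mxE; apply: eq_bigr => k _; rewrite !mxE; ring.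
Qed.
Lemma isd_lin2 (q w v : 'rV[R]_(p + p)) :
  is_derive q w (fun q : 'rV[R]_(p + p) => (lsubmx q *m Om *m (lsubmx v)^T) 0 0)
    ((lsubmx w *m Om *m (lsubmx v)^T) 0 0).
Proof.
rewrite (_ : (fun q : 'rV[R]_(p + p) => _) = (fun q => \sum_k (\sum_i lsubmx q 0 i * Om i k) * lsubmx v 0 k)); last first.
  by rewrite funeqE => y; rewrite !mxE; apply: eq_bigr => k _; rewrite !mxE; congr (_ * _); apply: eq_bigr => i _; rewrite mxE.
apply: is_derive_eq.
  apply: isdS => k; apply: (isdM _ (isdC _ _ _)).
  apply: isdS => i; exact: (isdM (isd_lc _ _ _) (isdC _ _ _)).
rewrite !mxE; apply: eq_bigr => k _; rewrite !mxE mulr0 add0r mulrC mulr_suml mulr_suml; apply: eq_bigr => i _; rewrite !mxE; ring.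
Qed.

Definition aq (B : 'M[R]_(m, p)) (q : 'rV[R]_(p + p)) j :=
  expR (o 0 j + (x *m B) 0 j + lsubmx q 0 j + rsubmx q 0 j ^+ 2 / 2).

Definition G1 B (v q : 'rV[R]_(p + p)) : R :=
  \sum_j (Y j)%:R * lsubmx v 0 j
  - \sum_j aq B q j * (lsubmx v 0 j + rsubmx q 0 j * rsubmx v 0 j)
  - 2^-1 * ((lsubmx v *m Om *m (lsubmx q)^T) 0 0 + (lsubmx q *m Om *m (lsubmx v)^T) 0 0)
  - \sum_j Om j j * (rsubmx q 0 j * rsubmx v 0 j)
  + \sum_j (rsubmx q 0 j)^-1 * rsubmx v 0 j.

Definition Fc B (q : 'rV[R]_(p + p)) :=
  \sum_j (Y j)%:R * (o 0 j + lsubmx q 0 j + (x *m B) 0 j)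
  - \sum_j aq B q j
  - \sum_j ln ((Y j)`!)%:R
  + 2^-1 * ln (\det Om)
  - 2^-1 * (lsubmx q *m Om *m (lsubmx q)^T) 0 0
  - 2^-1 * \sum_j Om j j * rsubmx q 0 j ^+ 2
  + \sum_j ln (rsubmx q 0 j)
  + p%:R / 2.

Lemma ELBOpsiE B : ELBOpsi Y x o Om B = Fc B.
Proof.
rewrite funeqE => q; rewrite /ELBOpsi /ELBO.
have -> : \sum_j atil x o B (lsubmx q) (rsubmx q) 0 j = \sum_j aq B q j.
  by apply: eq_bigr => j _; rewrite mxE.
by [].
Qed.

Ltac dtac := repeat first [ apply: isdC | apply: isdD | apply: isdB | apply: isdN
  | apply: isdS => ? | apply: isd_exp | apply: isd_ln | apply: isdX | apply: isdM
  | apply: isdV | apply: isd_lc | apply: isd_rc | apply: isd_xB | apply: isd_quad ].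

Lemma dF1 B (q v : 'rV[R]_(p + p)) : (forall j, 0 < rsubmx q 0 j) ->
  is_derive q v (ELBOpsi Y x o Om B) (G1 B v q).
Proof.
move=> qpos; rewrite ELBOpsiE /Fc /aq; apply: is_derive_eq.
  dtac.
all: try by apply: qpos.
rewrite /G1 /= !(mulr0, addr0, add0r).
congr (_ - _ - _ - _ + _).
- by apply: eq_bigr => i _; ring.
- by apply: eq_bigr => i _; rewrite /aq; field.
- by rewrite mulr_sumr; apply: eq_bigr => i _; field.
Qed.


Definition G2 B (v w q : 'rV[R]_(p + p)) : R :=
  0 - \sum_j (aq B q j * (lsubmx w 0 j + rsubmx q 0 j * rsubmx w 0 j) * (lsubmx v 0 j + rsubmx q 0 j * rsubmx v 0 j)
     + aq B q j * (rsubmx w 0 j * rsubmx v 0 j))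
  - 2^-1 * ((lsubmx v *m Om *m (lsubmx w)^T) 0 0 + (lsubmx w *m Om *m (lsubmx v)^T) 0 0)
  - \sum_j Om j j * (rsubmx w 0 j * rsubmx v 0 j)
  + \sum_j - ((rsubmx q 0 j ^+ 2)^-1 * (rsubmx w 0 j * rsubmx v 0 j)).

Ltac dtac2 := repeat first [ apply: isdC | apply: isdD | apply: isdB | apply: isdN
  | apply: isdS => ? | apply: isd_exp | apply: isd_ln | apply: isdX | apply: isdM
  | apply: isdV | apply: isd_lc | apply: isd_rc | apply: isd_xB | apply: isd_quad
  | apply: isd_lin1 | apply: isd_lin2 ].

Lemma dF2 B (q v w : 'rV[R]_(p + p)) : (forall j, 0 < rsubmx q 0 j) ->
  is_derive q w (G1 B v) (G2 B v w q).
Proof.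
move=> qpos; rewrite /G1 /aq; apply: is_derive_eq.
  dtac2.
all: try by rewrite gt_eqF ?qpos.
rewrite /G2 /aq /= !(mulr0, addr0, add0r).
congr (- _ - _ - _ + _).
- by apply: eq_bigr => i _; field.
- by apply: eq_bigr => i _; ring.
- apply: eq_bigr => i _; have := qpos i; move: (rsubmx q 0 i) => r rpos.
  by field; rewrite gt_eqF.
Qed.


Definition GB B (v : 'rV[R]_(p + p)) (U : 'M[R]_(m, p)) q : R :=
  - \sum_j aq B q j * (x *m U) 0 j * (lsubmx v 0 j + rsubmx q 0 j * rsubmx v 0 j).

Definition H1 B (U : 'M[R]_(m, p)) (q : 'rV[R]_(p + p)) : R :=
  \sum_j (Y j)%:R * (x *m U) 0 j - \sum_j aq B q j * (x *m U) 0 j.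

Lemma dGB B U (q v : 'rV[R]_(p + p)) :
  is_derive B U (fun B' => G1 B' v q) (GB B v U q).
Proof.
rewrite /G1 /aq; apply: is_derive_eq.
  dtac2.
rewrite /GB /aq /= !(mulr0, addr0, add0r).
by congr (- _); apply: eq_bigr => i _; ring.
Qed.

Lemma dH1 B U (q : 'rV[R]_(p + p)) :
  is_derive B U (fun B' => ELBOpsi Y x o Om B' q) (H1 B U q).
Proof.
rewrite (_ : (fun B' => _) = fun B' => Fc B' q); last first.
  by rewrite funeqE => B'; rewrite ELBOpsiE.
rewrite /Fc /aq; apply: is_derive_eq.
  dtac2.
rewrite /H1 /aq /= ?(mulr0, addr0, add0r).
by congr (_ - _); apply: eq_bigr => i _; ring.
Qed.

Lemma dH2 B U (q v : 'rV[R]_(p + p)) :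
  is_derive q v (H1 B U) (GB B v U q).
Proof.
rewrite /H1 /aq; apply: is_derive_eq.
  dtac2.
rewrite /GB /aq /= !(mulr0, addr0, add0r).
by congr (- _); apply: eq_bigr => i _; field.
Qed.

End ELBOd.

Set Implicit Arguments. Unset Strict Implicit.
Section Diag.
Variables (R : realType) (p : nat).
Definition dg (f : 'I_p -> R) : 'M[R]_p := diag_mx (\row_j f j).
Implicit Types f g : 'I_p -> R.

Lemma dgM f g : dg f *m dg g = dg (fun j => f j * g j).
Proof. by rewrite /dg mulmx_diag; congr diag_mx; apply/matrixP => i j; rewrite !mxE. Qed.
Lemma dgD f g : dg f + dg g = dg (fun j => f j + g j).
Proof. by apply/matrixP => i j; rewrite !mxE; case: eqP => _; rewrite ?mulr1n ?mulr0n ?addr0. Qed.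
Lemma dgN f : - dg f = dg (fun j => - f j).
Proof. by apply/matrixP => i j; rewrite !mxE; case: eqP => _; rewrite ?mulr1n ?mulr0n ?oppr0. Qed.
Lemma dgB f g : dg f - dg g = dg (fun j => f j - g j).
Proof. by rewrite dgN dgD. Qed.
Lemma dg1 : 1%:M = dg (fun _ => 1).
Proof. by apply/matrixP => i j; rewrite !mxE. Qed.
Lemma dg_eq f g : (forall j, f j = g j) -> dg f = dg g.
Proof. by move=> H; rewrite /dg; congr diag_mx; apply/matrixP => i j; rewrite !mxE H. Qed.
Lemma dgT f : (dg f)^T = dg f.
Proof. exact: tr_diag_mx. Qed.
Lemma dg_unit f : (forall j, f j != 0) -> dg f \in unitmx.
Proof.
move=> H; have /mulmx1_unit[] // : dg f *m dg (fun j => (f j)^-1) = 1%:M.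
by rewrite dgM dg1; apply: dg_eq => j; rewrite mulfV.
Qed.
Lemma dgV f : (forall j, f j != 0) -> invmx (dg f) = dg (fun j => (f j)^-1).
Proof.
move=> H; have u := dg_unit H.
have E : dg f *m dg (fun j => (f j)^-1) = 1%:M.
  by rewrite dgM dg1; apply: dg_eq => j; rewrite mulfV.
by rewrite -[RHS]mul1mx -(mulVmx u) -mulmxA E mulmx1.
Qed.
Lemma Dg_dg (a : 'rV[R]_p) : Dg a = dg (fun j => a 0 j).
Proof. by rewrite /Dg /dg; congr diag_mx; apply/matrixP => i j; rewrite !mxE ord1. Qed.
Lemma Dsqrt_dg (a : 'rV[R]_p) : Dsqrt a = dg (fun j => Num.sqrt (a 0 j)).
Proof. by rewrite /Dsqrt /dg; congr diag_mx; apply/matrixP => i j; rewrite !mxE ord1. Qed.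
Lemma Dinvsqrt_dg (a : 'rV[R]_p) : Dinvsqrt a = dg (fun j => (Num.sqrt (a 0 j))^-1).
Proof. by rewrite /Dinvsqrt /dg; congr diag_mx; apply/matrixP => i j; rewrite !mxE ord1. Qed.
Lemma OmD_dg (Om : 'M[R]_p) : OmD Om = dg (fun j => Om j j).
Proof. by []. Qed.
End Diag.

Lemma invmx_mulmx (R : realType) n (A B : 'M[R]_n) : A \in unitmx -> B \in unitmx ->
  invmx (A *m B) = invmx B *m invmx A.
Proof.
move=> uA uB.
have E : (A *m B) *m (invmx B *m invmx A) = 1%:M.
  by rewrite mulmxA -(mulmxA A) mulmxV // mulmx1 mulmxV.
by rewrite -[LHS]mulmx1 -E mulmxA mulVmx ?unitmx_mul ?uA ?uB // mul1mx.
Qed.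

Section Core.
Variables (R : realType) (p : nat) (a s : 'rV[R]_p) (Om : 'M[R]_p).
Hypothesis apos : forall j, 0 < a 0 j.
Hypothesis spos : forall j, 0 < s 0 j.
Hypothesis Om_sym : Om^T = Om.
Hypothesis Om_pd : forall v : 'rV[R]_p, v != 0 -> 0 < (v *m Om *m v^T) 0 0.

Lemma Omjj j : 0 < Om j j.
Proof.
have := Om_pd (v := delta_mx 0 j).
rewrite -rowE trmx_delta -colE !mxE; apply.
by apply/eqP => /matrixP /(_ 0 j); rewrite !mxE !eqxx /= => /eqP; rewrite oner_eq0.
Qed.

Definition dd j := a 0 j + a 0 j * s 0 j ^+ 2 + Om j j + (s 0 j ^+ 2)^-1.
Definition gg j := s 0 j ^+ 2 * a 0 j / dd j.
Definition cc j := a 0 j * (1 - gg j).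

Lemma dd_pos j : 0 < dd j.
Proof.
have := apos j; have := spos j; have := Omjj j; rewrite /dd => h1 h2 h3.
by rewrite !addr_gt0 ?mulr_gt0 ?exprn_gt0 ?invr_gt0 ?exprn_gt0.
Qed.

Lemma cc_pos j : 0 < cc j.
Proof.
rewrite /cc /gg mulr_gt0 ?apos // subr_gt0.
have hd := dd_pos j; rewrite ltr_pdivrMr // mul1r /dd.
have := apos j; have := spos j; have := Omjj j => h1 h2 h3.
have : 0 < (s 0 j ^+ 2)^-1 by rewrite invr_gt0 exprn_gt0.
nra.
Qed.

Lemma unit_dgOm (c : 'I_p -> R) : (forall j, 0 < c j) -> dg c + Om \in unitmx.
Proof.
move=> cpos; rewrite -row_free_unit; apply: inj_row_free => v Hv.
apply/eqP; apply/negPn/negP => vn0.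
have h1 := Om_pd vn0.
have h0 : ((v *m (dg c + Om)) *m v^T) 0 0 = 0 by rewrite Hv mul0mx mxE.
have h2 : 0 <= ((v *m dg c) *m v^T) 0 0.
  rewrite /dg mul_mx_diag !mxE; apply: sumr_ge0 => i _; rewrite !mxE.
  by rewrite mulrAC -expr2 mulr_ge0 ?sqr_ge0 // ltW.
move: h0; rewrite mulmxDr mulmxDl mxE => h0.
move: h0 h1 h2; set u := (_ *m v^T) 0 0; set w := (_ *m v^T) 0 0; lra.
Qed.

Definition Das := dg (fun j => a 0 j * s 0 j).
Definition Mm := block_mx (dg (fun j => a 0 j) + Om) Das Das (dg dd).
Definition Wm := row_mx (dg (fun j => a 0 j)) Das.
Definition Sm := dg cc + Om.
Definition X1 := invmx Sm *m dg cc.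
Definition X2 := dg (fun j => s 0 j * a 0 j / dd j) *m (1%:M - X1).

Lemma Sm_unit : Sm \in unitmx.
Proof. exact: unit_dgOm cc_pos. Qed.

Lemma dd_neq0 j : dd j != 0. Proof. by rewrite gt_eqF ?dd_pos. Qed.

Lemma aOm_split : dg (fun j => a 0 j) + Om = Sm + dg (fun j => a 0 j * gg j).
Proof.
rewrite /Sm addrAC dgD; congr (_ + _); apply: dg_eq => j; rewrite /cc; ring.
Qed.

Lemma Das_X2 : Das *m dg (fun j => s 0 j * a 0 j / dd j) = dg (fun j => a 0 j * gg j).
Proof. rewrite /Das dgM; apply: dg_eq => j; rewrite /gg; ring. Qed.

Lemma dd_X2 : dg dd *m dg (fun j => s 0 j * a 0 j / dd j) = Das.
Proof.
rewrite /Das dgM; apply: dg_eq => j; have := dd_neq0 j; move: (dd j) => d dn0.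
by field.
Qed.

Lemma SX1 : Sm *m X1 = dg cc.
Proof. by rewrite /X1 mulKVmx // Sm_unit. Qed.

Lemma MmX : Mm *m col_mx X1 X2 = Wm^T.
Proof.
rewrite /Mm /Wm mul_block_col tr_row_mx !dgT; congr col_mx.
  rewrite aOm_split /X2 mulmxA Das_X2 mulmxDl SX1 mulmxBr mulmx1.
  rewrite [_ - _ *m X1]addrC addrA addrK dgD; apply: dg_eq => j; rewrite /cc; ring.
by rewrite /X2 mulmxA dd_X2 mulmxBr mulmx1 addrC subrK.
Qed.

Lemma Mm_unit : Mm \in unitmx.
Proof.
rewrite -row_free_unit; apply: inj_row_free => v.
rewrite -[v]hsubmxK /Mm mul_row_block => /eqP; rewrite row_mx_eq0 => /andP[/eqP e1 /eqP e2].
set u := lsubmx v in e1 e2 *; set w := rsubmx v in e1 e2 *.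
have ew : w = - (u *m dg (fun j => s 0 j * a 0 j / dd j)).
  have := congr1 (mulmx^~ (dg (fun j => (dd j)^-1))) e2.
  rewrite mul0mx mulmxDl -!mulmxA [dg dd *m _]dgM.
  rewrite (@dg_eq _ _ (fun j => dd j / dd j) (fun _ => 1)); last by move=> j; rewrite mulfV ?dd_neq0.
  rewrite -dg1 mulmx1 /Das dgM => /eqP; rewrite addr_eq0 => /eqP h.
  rewrite -[w]opprK -h; congr (- (_ *m _)); apply: dg_eq => j; ring.
have eu : u = 0.
  move: e1; rewrite ew mulNmx -mulmxA /Das dgM.
  rewrite (@dg_eq _ _ (fun j => s 0 j * a 0 j / dd j * (a 0 j * s 0 j)) (fun j => a 0 j * gg j)); last by move=> j; rewrite /gg; ring.
  rewrite aOm_split mulmxDr addrK.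
  by move=> /(congr1 (mulmx^~ (invmx Sm))); rewrite mulmxK ?Sm_unit // mul0mx.
by rewrite ew eu mul0mx oppr0 row_mx0.
Qed.


Lemma Zform : Wm *m invmx Mm *m Wm^T = dg (fun j => a 0 j * gg j) + dg cc *m invmx Sm *m dg cc.
Proof.
rewrite -mulmxA -MmX mulKmx ?Mm_unit // /Wm mul_row_col /X2 mulmxA Das_X2 /X1.
have ha : dg (fun j => a 0 j) = dg cc + dg (fun j => a 0 j * gg j).
  by rewrite dgD; apply: dg_eq => j; rewrite /cc; ring.
rewrite ha mulmxDl mulmxBr mulmx1 [_ - _ *m (_ *m _)]addrC addrA addrK addrC.
by rewrite mulmxA.
Qed.

Lemma sqa j : Num.sqrt (a 0 j) ^+ 2 = a 0 j.
Proof. by rewrite sqr_sqrtr // ltW. Qed.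
Lemma sqa_neq0 j : Num.sqrt (a 0 j) != 0.
Proof. by rewrite gt_eqF // sqrtr_gt0. Qed.

Lemma Gform : Dg s *m Lambda a s Om *m Dg s = dg gg.
Proof.
rewrite /Lambda !Dg_dg OmD_dg dg1 !(dgM, dgD) dgV; last first.
  move=> j; apply: lt0r_neq0 => /=.
  have := apos j; have := spos j; have := Omjj j => h1 h2 h3.
  rewrite addr_gt0 // mulr_gt0 ?mulr_gt0 // !addr_gt0 // ?mulr_gt0 // mulr_gt0 //.
rewrite !dgM; apply: dg_eq => j /=.
have := apos j; have := spos j; have := Omjj j => h1 h2 h3.
rewrite /gg /dd.
have h4 : 1 + s 0 j * s 0 j * (a 0 j + a 0 j * (s 0 j * s 0 j) + Om j j) != 0.
  by apply: lt0r_neq0; rewrite addr_gt0 // !mulr_gt0 // !addr_gt0 // !mulr_gt0.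
have h5 : a 0 j + a 0 j * s 0 j ^+ 2 + Om j j + (s 0 j ^+ 2)^-1 != 0.
  by apply: lt0r_neq0; rewrite !addr_gt0 // ?mulr_gt0 ?exprn_gt0 ?invr_gt0 ?exprn_gt0.
move: h4 h5; move: (s 0 j) (a 0 j) (Om j j) (gt_eqF h2) => sj aj oj sn0 h4 h5.
field; rewrite sn0 /=.
by have -> : (aj + aj * sj ^+ 2 + oj) * sj ^+ 2 + 1 = 1 + sj * sj * (aj + aj * (sj * sj) + oj) by ring.
Qed.


Definition Dsq := dg (fun j => Num.sqrt (a 0 j)).
Definition Dis := dg (fun j => (Num.sqrt (a 0 j))^-1).

Lemma Dis_unit : Dis \in unitmx.
Proof. by apply: dg_unit => j; rewrite invr_eq0 sqa_neq0. Qed.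

Lemma invDis : invmx Dis = Dsq.
Proof. by rewrite /Dis dgV => [|j]; [apply: dg_eq => j; rewrite invrK | rewrite invr_eq0 sqa_neq0]. Qed.

Lemma Cform : Cmx a s Om = Dsq *m invmx Sm *m Dsq.
Proof.
rewrite /Cmx Gform Dinvsqrt_dg -/Dis.
have -> : 1%:M + Dis *m Om *m Dis - dg gg = Dis *m Sm *m Dis.
  rewrite /Sm mulmxDr mulmxDl addrAC dg1 dgB /Dis !dgM; congr (_ + _).
  apply: dg_eq => j /=; rewrite /cc; set r := Num.sqrt (a 0 j).
  have hr : r != 0 := sqa_neq0 j; have e := sqa j; rewrite -/r in e.
  set gj := gg j; set aj := a 0 j in e *; rewrite -e; field.
  by [].

rewrite invmx_mulmx ?unitmx_mul ?Dis_unit ?Sm_unit // invmx_mulmx ?Dis_unit ?Sm_unit //.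
by rewrite invDis mulmxA.
Qed.

Lemma Eform : Dsqrt a *m Emx a s Om *m Dsqrt a = dg (fun j => a 0 j * gg j) + dg cc *m invmx Sm *m dg cc.
Proof.
rewrite /Emx /Gmx Gform Cform Dsqrt_dg -/Dsq [Dsq *m (dg gg + _)]mulmxDr [(_ + _) *m Dsq]mulmxDl; congr (_ + _).
  rewrite /Dsq !dgM; apply: dg_eq => j /=; rewrite mulrAC -expr2 sqa; ring.
have -> : Dsq *m ((1%:M - dg gg) *m (Dsq *m invmx Sm *m Dsq) *m (1%:M - dg gg)) *m Dsq
   = (Dsq *m (1%:M - dg gg) *m Dsq) *m invmx Sm *m (Dsq *m (1%:M - dg gg) *m Dsq).
  by rewrite !mulmxA.
have -> : Dsq *m (1%:M - dg gg) *m Dsq = dg cc.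
  rewrite dg1 dgB /Dsq !dgM; apply: dg_eq => j /=; rewrite /cc mulrAC -expr2 sqa; ring.
by [].
Qed.

Theorem core : Wm *m invmx Mm *m Wm^T = Dsqrt a *m Emx a s Om *m Dsqrt a.
Proof. by rewrite Zform Eform. Qed.

End Core.

Section Link.
Variables (R : realType) (p m : nat) (Y : 'I_p -> nat) (x : 'rV[R]_m) (o : 'rV[R]_p)
  (B : 'M[R]_(m, p)) (Om : 'M[R]_p) (mu s : 'rV[R]_p).
Hypothesis Om_sym : Om^T = Om.
Hypothesis Om_pd : forall v : 'rV[R]_p, v != 0 -> 0 < (v *m Om *m v^T) 0 0.
Hypothesis s_pos : forall j, 0 < s 0 j.

Let psi := row_mx mu s.
Let a := atil x o B mu s.

Lemma quad_dg (u z : 'rV[R]_p) f : (u *m dg f *m z^T) 0 0 = \sum_j u 0 j * f j * z 0 j.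
Proof. by rewrite /dg mul_mx_diag !mxE; apply: eq_bigr => j _; rewrite !mxE. Qed.

Lemma aq_psi j : aq x o B psi j = a 0 j.
Proof. by rewrite /aq /a /atil /psi mxE row_mxKl row_mxKr. Qed.

Lemma OmT (u z : 'rV[R]_p) : (u *m Om *m z^T) 0 0 = (z *m Om *m u^T) 0 0.
Proof.
have h : (u *m Om *m z^T)^T = z *m Om *m u^T by rewrite !trmx_mul trmxK Om_sym mulmxA.
by rewrite -h [RHS]mxE.
Qed.


Lemma G2_mat (v w : 'rV[R]_(p + p)) :
  G2 x o Om B v w psi = - (w *m Mm a s Om *m v^T) 0 0.
Proof.
set vl := lsubmx v; set vr := rsubmx v; set wl := lsubmx w; set wr := rsubmx w.
have -> : w *m Mm a s Om *m v^T = wl *m (dg (fun j => a 0 j) + Om) *m vl^T + wr *m Das a s *m vl^T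
   + (wl *m Das a s *m vr^T + wr *m dg (dd a s Om) *m vr^T).
  rewrite -[w]hsubmxK -[v]hsubmxK /Mm mul_row_block tr_row_mx mul_row_col !mulmxDl.
  by rewrite -/vl -/vr -/wl -/wr ?mulmxA.
have addE : forall A B : 'M[R]_1, (A + B) 0 0 = A 0 0 + B 0 0 by move=> ? ?; rewrite mxE.
rewrite mulmxDr mulmxDl !addE /Das !quad_dg /G2 OmT.
under eq_bigr do rewrite aq_psi.
rewrite /psi row_mxKr -/vl -/vr -/wl -/wr.
set t := (wl *m Om *m vl^T) 0 0.
transitivity (- t - \sum_j (a 0 j * (wl 0 j + s 0 j * wr 0 j) * (vl 0 j + s 0 j * vr 0 j)
   + a 0 j * (wr 0 j * vr 0 j) + Om j j * (wr 0 j * vr 0 j) + s 0 j ^- 2 * (wr 0 j * vr 0 j))).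
  by rewrite !big_split /= sumrN; field.
transitivity (- t - \sum_j (wl 0 j * a 0 j * vl 0 j + wr 0 j * (a 0 j * s 0 j) * vl 0 j
   + wl 0 j * (a 0 j * s 0 j) * vr 0 j + wr 0 j * dd a s Om j * vr 0 j)).
  congr (_ - _); apply: eq_bigr => j _; rewrite /dd.
  have := s_pos j; move: (s 0 j) => sj sj0.
  by field; rewrite gt_eqF.
rewrite !big_split /=; ring.
Qed.

Lemma GB_mat (v : 'rV[R]_(p + p)) U :
  GB x o B v U psi = - (x *m U *m Wm a s *m v^T) 0 0.
Proof.
have addE : forall A B : 'M[R]_1, (A + B) 0 0 = A 0 0 + B 0 0 by move=> ? ?; rewrite mxE.
rewrite -[v]hsubmxK /Wm tr_row_mx mul_mx_row mul_row_col addE /Das !quad_dg /GB.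
rewrite /psi row_mxKr -big_split /=; congr (- _); apply: eq_bigr => j _.
rewrite aq_psi ?row_mxKl ?row_mxKr; ring.
Qed.

Lemma near_pos : \forall q \near psi, forall j, 0 < rsubmx q 0 j.
Proof.
suff H : forall j, \forall q \near psi, 0 < rsubmx q 0 j by exact: filter_forall H.
move=> j; have h : 0 < psi 0 (rshift p j) by rewrite /psi row_mxEr.
have := @coord_continuous R 1 (p + p) 0 (rshift p j) psi; move=> /cvgr_gt /(_ 0 h); apply: filterS => q.
by rewrite mxE.
Qed.

Lemma epsi_entry (M : 'M[R]_(p + p)) i j : (epsi R i *m M *m (epsi R j)^T) 0 0 = M i j.
Proof. by rewrite /epsi -rowE trmx_delta -colE !mxE. Qed.

Lemma Hpsipsi_val : Hpsipsi Y x o Om B psi = - Mm a s Om.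
Proof.
apply/matrixP => i j; rewrite mxE [RHS]mxE.
have pos : forall j, 0 < rsubmx psi 0 j by move=> k; rewrite /psi row_mxKr.
rewrite (@near_eq_derive _ _ _ _ (G1 Y x o Om B (epsi R j))); last first.
  by apply: filterS near_pos => q qpos; have [_ ->] := dF1 Y x o Om B (epsi R j) qpos.
by have [_ ->] := dF2 Y x o Om B (epsi R j) (epsi R i) pos; rewrite G2_mat epsi_entry.
Qed.


Definition Pm : 'M[R]_(p * m, p) := \matrix_(i, j) (x *m eB R i) 0 j.

Lemma epsi_col (u : 'rV[R]_(p + p)) b : (u *m (epsi R b)^T) 0 0 = u 0 b.
Proof. by rewrite /epsi trmx_delta -colE !mxE. Qed.

Lemma PW_entry i b : (x *m eB R i *m Wm a s *m (epsi R b)^T) 0 0 = (Pm *m Wm a s) i b.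
Proof. by rewrite epsi_col !mxE; apply: eq_bigr => j _; rewrite !mxE. Qed.

Lemma HBpsi_val : HBpsi Y x o Om B psi = - (Pm *m Wm a s).
Proof.
apply/matrixP => i b; rewrite mxE [RHS]mxE.
have pos : forall j, 0 < rsubmx psi 0 j by move=> k; rewrite /psi row_mxKr.
rewrite (_ : (fun B' => _) = fun B' => G1 Y x o Om B' (epsi R b) psi); last first.
  by rewrite funeqE => B'; have [_ ->] := dF1 Y x o Om B' (epsi R b) pos.
by have [_ ->] := dGB Y x o Om B (eB R i) psi (epsi R b); rewrite GB_mat PW_entry.
Qed.

Lemma HpsiB_val : HpsiB Y x o Om B psi = - (Pm *m Wm a s)^T.
Proof.
apply/matrixP => b i; rewrite mxE [RHS]mxE [in RHS]mxE.
rewrite (_ : (fun q => _) = H1 Y x o B (eB R i)); last first.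
  by rewrite funeqE => q; have [_ ->] := dH1 Y x o Om B (eB R i) q.
by have [_ ->] := dH2 Y x o B (eB R i) psi (epsi R b); rewrite GB_mat PW_entry.
Qed.


Lemma sum_delta (F : 'I_p -> R) j1 : \sum_j F j * (j == j1)%:R = F j1.
Proof.
rewrite (bigD1 j1) //= eqxx mulr1 big1 ?addr0 // => j /negPf ->; by rewrite mulr0.
Qed.

Lemma Pm_entry j0 k j : Pm (mxtens_index (j0, k)) j = x 0 k * (j == j0)%:R.
Proof.
rewrite mxE /eB mxtens_indexK /= mxE (bigD1 k) //= mxE eqxx /= big1 ?addr0 // => r /negPf rk.
by rewrite mxE rk /= mulr0.
Qed.

Lemma tens_P (Z : 'M[R]_p) : Pm *m Z *m Pm^T = Z *t (x^T *m x).
Proof.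
apply/matrixP => i1 i2.
case: (mxtens_indexP i1) => j1 k1; case: (mxtens_indexP i2) => j2 k2.
rewrite tensmxE mxE [(x^T *m x) _ _]mxE big_ord1 !mxE.
rewrite (eq_bigr (fun l => x 0 k1 * Z j1 l * x 0 k2 * (l == j2)%:R)); last first.
  move=> l _; rewrite [Pm^T _ _]mxE Pm_entry mxE.
  rewrite (eq_bigr (fun j => x 0 k1 * Z j l * (j == j1)%:R)) ?sum_delta; first by ring.
  by move=> j _; rewrite Pm_entry; ring.
by rewrite sum_delta; ring.
Qed.

End Link.

Lemma invmxN' (R : realType) n (A : 'M[R]_n) : A \in unitmx -> invmx (- A) = - invmx A.
Proof.
move=> uA.
have E : (- A) *m (- invmx A) = 1%:M by rewrite mulNmx mulmxN opprK mulmxV.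
have [u' _] := mulmx1_unit E.
by rewrite -[RHS]mul1mx -(mulVmx u') -mulmxA E mulmx1.
Qed.

Unset Implicit Arguments.
Set Strict Implicit.

Theorem proposition9 (R : realType) (p m : nat)
  (Y : 'I_p -> nat) (x : 'rV[R]_m) (o : 'rV[R]_p)
  (B : 'M[R]_(m, p)) (Om : 'M[R]_p)
  (Om_sym : Om^T = Om)
  (Om_pd : forall v : 'rV[R]_p, v != 0 -> 0 < (v *m Om *m v^T) 0 0)
  (mu s : 'rV[R]_p) (s_pos : forall j, 0 < s 0 j) :
  let psi := row_mx mu s in
  let a := atil x o B mu s in
  HBpsi Y x o Om B psi *m invmx (Hpsipsi Y x o Om B psi) *m HpsiB Y x o Om B psi
  = - ((Dsqrt a *m Emx a s Om *m Dsqrt a) *t (x^T *m x)).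
Proof.
move=> psi a; rewrite /psi /a.
have apos : forall j, 0 < atil x o B mu s 0 j by move=> j; rewrite mxE expR_gt0.
rewrite HBpsi_val // HpsiB_val // Hpsipsi_val //.
rewrite invmxN' ?Mm_unit //.
rewrite !(mulNmx, mulmxN, opprK) trmx_mul; congr (- _).
have -> : Pm p x *m Wm (atil x o B mu s) s *m invmx (Mm (atil x o B mu s) s Om) *m
    ((Wm (atil x o B mu s) s)^T *m (Pm p x)^T)
  = Pm p x *m (Wm (atil x o B mu s) s *m invmx (Mm (atil x o B mu s) s Om) *m (Wm (atil x o B mu s) s)^T) *m (Pm p x)^T.
  by rewrite !mulmxA.
by rewrite core // tens_P.
Qed.
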